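(* Let $G$ be the graph defined in the context. Then $G$ does not contain an induced subgraph isomorphic to $P_6$.
   Context: $P_n$ denotes the path on $n$ vertices. Let $\mathbb{F}=\mathbb{F}_2[\alpha]/(\alpha^4+\alpha+1)$ be the field with 16 elements. Let $S=\{x^3: x\in\mathbb{F}^\times\}=\{1,\alpha^3,\alpha^2+\alpha^3,\alpha+\alpha^3,1+\alpha+\alpha^2+\alpha^3\}$ be the set of nonzero cubes. Let $G$ be the graph with vertex set $\mathbb{F}$ in which distinct $x,y$ are adjacent if and only if $x-y\in S$. *)

(* Defs.v *)
From mathcomp Require Import all_boot.
Set Implicit Arguments. Unset Strict Implicit. Unset Printing Implicit Defensive.

(* GF(16) = F_2[alpha]/(alpha^4 + alpha + 1), elements represented by their
   coefficient vectors (a0,a1,a2,a3) meaning a0 + a1 alpha + a2 alpha^2 + a3 alpha^3. *)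
Definition GF16 : finType := (bool * bool * bool * bool)%type.

Definition gf_zero : GF16 := (false, false, false, false).
Definition gf_one : GF16 := (true, false, false, false).
Definition gf_alpha : GF16 := (false, true, false, false).

Definition gf_add (x y : GF16) : GF16 :=
  let: (a0, a1, a2, a3) := x in
  let: (b0, b1, b2, b3) := y in
  (addb a0 b0, addb a1 b1, addb a2 b2, addb a3 b3).

Definition gf_opp (x : GF16) : GF16 :=
  let: (a0, a1, a2, a3) := x in (a0, a1, a2, a3).
Definition gf_sub (x y : GF16) : GF16 := gf_add x (gf_opp y).

(* multiplication by alpha, using alpha^4 = alpha + 1 *)
Definition gf_mul_alpha (x : GF16) : GF16 :=
  let: (a0, a1, a2, a3) := x in (a3, addb a0 a3, a1, a2).

Definition gf_scale (b : bool) (x : GF16) : GF16 := if b then x else gf_zero.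

Definition gf_mul (x y : GF16) : GF16 :=
  let: (b0, b1, b2, b3) := y in
  let x1 := gf_mul_alpha x in
  let x2 := gf_mul_alpha x1 in
  let x3 := gf_mul_alpha x2 in
  gf_add (gf_scale b0 x)
    (gf_add (gf_scale b1 x1) (gf_add (gf_scale b2 x2) (gf_scale b3 x3))).

Definition gf_cube (x : GF16) : GF16 := gf_mul x (gf_mul x x).

Definition cubes : {set GF16} := [set gf_cube x | x in [set y | y != gf_zero]].

Definition G_adj : rel GF16 := fun x y => (x != y) && (gf_sub x y \in cubes).

Definition induced_P6 (V : finType) (e : rel V) (f : 'I_6 -> V) : Prop :=
  injective f /\
  forall i j : 'I_6, e (f i) (f j) = ((i.+1 == j :> nat) || (j.+1 == i :> nat)).

(* Main.v *)
Require Import Defs.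
From mathcomp Require Import all_boot.

Definition allL : seq GF16 :=
  [:: (true,true,true,true); (true,true,true,false); (true,true,false,true); (true,true,false,false); (true,false,true,true); (true,false,true,false); (true,false,false,true); (true,false,false,false); (false,true,true,true); (false,true,true,false); (false,true,false,true); (false,true,false,false); (false,false,true,true); (false,false,true,false); (false,false,false,true); (false,false,false,false)].

Lemma mem_allL (x : GF16) : x \in allL.
Proof. by case: x => [[[[] []] []] []]. Qed.

Definition Slist : seq GF16 :=
  [seq gf_cube y | y <- allL & y != gf_zero].

Lemma cubesE x : (x \in cubes) = (x \in Slist).
Proof.
apply/imsetP/mapP.
  by case=> y; rewrite inE => Hy ->; exists y; rewrite // mem_filter Hy mem_allL.
by case=> y; rewrite mem_filter => /andP [Hy _] ->; exists y; rewrite ?inE.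
Qed.

Definition adjF (x y : GF16) : bool := (x != y) && (gf_sub x y \in Slist).

Lemma adjE x y : G_adj x y = adjF x y.
Proof. by rewrite /G_adj /adjF cubesE. Qed.


Definition inS (d : GF16) : bool :=
  let: (a0, a1, a2, a3) := d in
  match a0, a1, a2, a3 with
  | true, false, false, false => true
  | false, false, false, true => true
  | false, false, true, true => true
  | false, true, false, true => true
  | true, true, true, true => true
  | _, _, _, _ => false
  end.

Definition adjB (x y : GF16) : bool := inS (gf_sub x y).

Lemma adjB_ok : all (fun x => all (fun y => adjF x y == adjB x y) allL) allL.
Proof. by vm_compute. Qed.

Lemma adjFB x y : adjF x y = adjB x y.
Proof.
by move/allP: adjB_ok => /(_ x (mem_allL x)) /allP /(_ y (mem_allL y)) /eqP.
Qed.

Definition eqG (x y : GF16) : bool :=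
  let: (a0, a1, a2, a3) := x in let: (b0, b1, b2, b3) := y in
  [&& a0 == b0, a1 == b1, a2 == b2 & a3 == b3].

Lemma eqGE x y : eqG x y = (x == y).
Proof. by case: x => [[[??]?]?]; case: y => [[[??]?]?]; rewrite /eqG !xpair_eqE !andbA. Qed.

Definition Bp (a : GF16) : bool :=
  has (fun b =>
    adjB a b && has (fun c =>
    [&& adjB b c, ~~ adjB a c, ~~ eqG a c &
    has (fun d =>
    [&& adjB c d, ~~ adjB a d, ~~ adjB b d, ~~ eqG a d, ~~ eqG b d &
    has (fun e =>
    [&& adjB d e, ~~ adjB a e, ~~ adjB b e, ~~ adjB c e, ~~ eqG a e, ~~ eqG b e, ~~ eqG c e &
    has (fun h =>
    [&& adjB e h, ~~ adjB a h, ~~ adjB b h, ~~ adjB c h, ~~ adjB d h,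
        ~~ eqG a h, ~~ eqG b h, ~~ eqG c h & ~~ eqG d h]) allL]) allL]) allL]) allL) allL.

Lemma B_false : Bp gf_zero = false.
Proof. by vm_compute. Qed.

Lemma addb_tr a b c : addb (addb a c) (addb b c) = addb a b.
Proof. by case: a; case: b; case: c. Qed.

Lemma sub_tr x y z : gf_sub (gf_sub x z) (gf_sub y z) = gf_sub x y.
Proof.
by case: x => [[[??]?]?]; case: y => [[[??]?]?]; case: z => [[[??]?]?];
  rewrite /gf_sub /gf_add /gf_opp !addb_tr.
Qed.

Lemma sub_inj z : injective (fun x => gf_sub x z).
Proof.
move=> x y /= E; have := congr1 (fun w => gf_sub w (gf_sub gf_zero z)) E.
rewrite !sub_tr.
by case: x {E} => [[[??]?]?]; case: y => [[[??]?]?]; rewrite /gf_sub /gf_add /gf_opp /= !addbF.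
Qed.

Lemma sub_self x : gf_sub x x = gf_zero.
Proof. by case: x => [[[??]?]?]; rewrite /gf_sub /gf_add /gf_opp !addbb. Qed.

Theorem claim1 : ~ exists f : 'I_6 -> GF16, induced_P6 G_adj f.
Proof.
case=> f0 [finj0 H0].
pose f i := gf_sub (f0 i) (f0 ord0).
have finj : injective f by move=> i j /sub_inj /finj0.
have H : forall i j, G_adj (f i) (f j) = ((i.+1 == j :> nat) || (j.+1 == i :> nat)).
  move=> i j; rewrite -H0 /G_adj /f sub_tr (inj_eq (@sub_inj _)) //.
have H' : forall i j : 'I_6, adjB (f i) (f j) = ((i.+1 == j :> nat) || (j.+1 == i :> nat)).
  by move=> i j; rewrite -adjFB -adjE H.
have N : forall i j : 'I_6, (~~ eqG (f i) (f j)) = (i != j) by move=> i j; rewrite eqGE (inj_eq finj).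
have g0 : f (inord 0) = gf_zero.
  rewrite /f; have -> : (inord 0 : 'I_6) = ord0 by apply/val_inj; rewrite /= inordK.
  exact: sub_self.
suff: Bp (f (inord 0)) by rewrite g0 B_false.
apply/hasP; exists (f (inord 1)); first exact: mem_allL.
apply/andP; split; first by rewrite H' !inordK.
apply/hasP; exists (f (inord 2)); first exact: mem_allL.
rewrite !H' !N.
do !(apply/andP; split; first by rewrite -?(inj_eq val_inj) /= !inordK).
apply/hasP; exists (f (inord 3)); first exact: mem_allL.
rewrite !H' !N.
do !(apply/andP; split; first by rewrite -?(inj_eq val_inj) /= !inordK).
apply/hasP; exists (f (inord 4)); first exact: mem_allL.
rewrite !H' !N.
do !(apply/andP; split; first by rewrite -?(inj_eq val_inj) /= !inordK).
apply/hasP; exists (f (inord 5)); first exact: mem_allL.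
rewrite !H' !N.
by rewrite -!(inj_eq val_inj) /= !inordK.
Qed.
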